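(* Let $G$ be a connected, nontraceable detour graph of order $n$. Then: (1) $G$ is $2$-connected (hence $\delta(G)\ge 2$); (2) every vertex of $G$ has at most one neighbour of degree $2$; (3) $G$ contains a longest path $P$ such that both endvertices of $P$ have degree at least $3$; (4) $\Delta(G)\le \tau(G)-4$; (5) if $T$ is the set of vertices of degree $2$ in $G$, then $|V(G)\setminus T|\ge |T|$; (6) $|E(G)|\ge \left\lceil \frac{5n}{4}\right\rceil$.
   Context: All graphs are finite and simple. The order of a path is its number of vertices. For a vertex $v$ of $G$, $\tau(v)$ is the order of a longest path in $G$ having $v$ as an endvertex, and $\tau(G)$ is the order of a longest path in $G$. A graph is traceable if it has a path containing all its vertices (a hamiltonian path), and nontraceable otherwise. A detour graph is a graph in which all vertices have the same value of $\tau(v)$. $\delta(G)$ and $\Delta(G)$ are the minimum and maximum degree. *)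

(* Defs.v *)
(* Finite simple graphs: symmetric irreflexive relation e on a finType T. *)
From mathcomp Require Import all_boot.
Set Implicit Arguments. Unset Strict Implicit. Unset Printing Implicit Defensive.

Section Graphs.
Variables (T : finType) (e : rel T).

(* a path: nonempty sequence of pairwise distinct vertices, consecutive ones adjacent;
   its order is its size (number of vertices) *)
Definition gpath (p : seq T) : bool :=
  if p is x :: s then path e x s && uniq p else false.

Definition endvertex (v : T) (p : seq T) : bool :=
  if p is x :: s then (v == x) || (v == last x s) else false.

Definition has_path_end (v : T) (k : nat) : bool :=
  [exists t : k.-tuple T, gpath t && endvertex v t].

Definition has_path (k : nat) : bool :=
  [exists t : k.-tuple T, gpath t].

(* paths have order at most #|T| since their vertices are distinct *)
Definition tau_v (v : T) : nat :=
  \max_(k < #|T|.+1 | has_path_end v k) k.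

Definition tauG : nat := \max_(k < #|T|.+1 | has_path k) k.

Definition traceable : Prop := exists p : seq T, gpath p /\ size p = #|T|.

Definition detour : Prop := forall u v : T, tau_v u = tau_v v.

Definition connected_graph : Prop := forall u v : T, connect e u v.

Definition deg (v : T) : nat := #|[set u | e v u]|.

Definition min_deg : nat := \big[minn/#|T|]_(v : T) deg v.
Definition max_deg : nat := \max_(v : T) deg v.

Definition two_connected : Prop :=
  2 < #|T| /\ connected_graph /\
  forall x u v : T, u != x -> v != x ->
    connect (fun a b => [&& e a b, a != x & b != x]) u v.

Definition edge_set : {set {set T}} :=
  [set [set x; y] | x in T, y in T & e x y].

End Graphs.

(* Main.v *)
Require Import Defs.
From mathcomp Require Import all_boot zify.
Set Implicit Arguments. Unset Strict Implicit. Unset Printing Implicit Defensive.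

Section Basics.
Variables (T : finType) (e : rel T).
Hypothesis esym : symmetric e.
Hypothesis eirr : irreflexive e.

Local Notation gp := (gpath e).

Lemma gp_splice x A y B : gp (x :: A ++ y :: B) -> e (last x A) (last y B) ->
  gp (x :: A ++ rev (y :: B)).
Proof.
rewrite /gpath => /andP[Hp Hu] He; apply/andP; split.
  move: Hp; rewrite !cat_path => /andP[-> /= /andP[_ H2]] /=.
  rewrite (lastI y B) rev_rcons /= He /= rev_path.
  by apply: sub_path H2 => u v; rewrite esym.
move: Hu; rewrite !cons_uniq !cat_uniq !mem_cat mem_rev rev_uniq has_rev.
done.
Qed.

Lemma gp_rev p : gp p -> gp (rev p).
Proof.
case: p => // y B; rewrite /gpath => /andP[Hp Hu].
rewrite (lastI y B) rcons_uniq in Hu.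
rewrite (lastI y B) rev_rcons /= rev_path mem_rev rev_uniq Hu andbT.
by apply: sub_path Hp => u v; rewrite esym.
Qed.


Lemma gp_size p : gp p -> size p <= #|T|.
Proof.
case: p => // x s /andP[_ /card_uniqP <-]; exact: max_card.
Qed.

Lemma has_pathP k : reflect (exists p, gp p /\ size p = k) (has_path e k).
Proof.
apply: (iffP existsP) => [[t Ht]|[p [Hp <-]]].
  by exists (val t); rewrite size_tuple.
by exists (in_tuple p).
Qed.

Lemma has_path_endP v k :
  reflect (exists p, [/\ gp p, size p = k & endvertex v p]) (has_path_end e v k).
Proof.
apply: (iffP existsP) => [[t /andP[H1 H2]]|[p [Hp <- Hv]]].
  by exists (val t); rewrite size_tuple.
by exists (in_tuple p); rewrite Hp.
Qed.

Lemma tauG_ub p : gp p -> size p <= tauG e.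
Proof.
move=> Hp; have Hs : size p < #|T|.+1 by rewrite ltnS gp_size.
rewrite /tauG; apply: (leq_bigmax_cond (Ordinal Hs) (P := fun k : 'I_#|T|.+1 => has_path e k)).
by apply/has_pathP; exists p.
Qed.

Lemma tauv_ub v p : gp p -> endvertex v p -> size p <= tau_v e v.
Proof.
move=> Hp Hv; have Hs : size p < #|T|.+1 by rewrite ltnS gp_size.
rewrite /tau_v; apply: (leq_bigmax_cond (Ordinal Hs) (P := fun k : 'I_#|T|.+1 => has_path_end e v k)).
by apply/has_path_endP; exists p.
Qed.

Lemma gp1 v : gp [:: v].
Proof. by []. Qed.

Lemma tauG_ex (v0 : T) : exists p, gp p /\ size p = tauG e.
Proof.
have H1 : 1 < #|T|.+1 by rewrite ltnS; apply/card_gt0P; exists v0.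
rewrite /tauG (bigmax_eq_arg (Ordinal H1)); last by apply/has_pathP; exists [:: v0].
by case: arg_maxnP => [|i /has_pathP Hi _] //; apply/has_pathP; exists [:: v0].
Qed.

Lemma tauv_ex v : exists p, [/\ gp p, size p = tau_v e v & endvertex v p].
Proof.
have H1 : 1 < #|T|.+1 by rewrite ltnS; apply/card_gt0P; exists v.
have P1 : has_path_end e v (Ordinal H1) by apply/has_path_endP; exists [:: v]; rewrite /= eqxx.
rewrite /tau_v (bigmax_eq_arg (Ordinal H1)) //.
by case: arg_maxnP => // i /has_path_endP Hi _.
Qed.

Lemma gp_splice2 A y B : A != [::] -> gp (A ++ y :: B) -> e (last y A) (last y B) ->
  gp (A ++ rev (y :: B)).
Proof. by case: A => // x A _; apply: gp_splice. Qed.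

End Basics.

Section Main.
Variables (T : finType) (e : rel T).
Hypothesis esym : symmetric e.
Hypothesis eirr : irreflexive e.
Hypothesis Gconn : connected_graph e.
Hypothesis Gntr : ~ traceable e.
Hypothesis Gdet : detour e.
Hypothesis Tn : 0 < #|T|.

Local Notation gp := (gpath e).
Local Notation tau := (tauG e).

Lemma longest_from v : exists s, gp (v :: s) /\ size (v :: s) = tau.
Proof.
have [p [Hp Hs]] := tauG_ex e v.
case: p Hp Hs => // u s Hp Hs.
have Hu : tau <= tau_v e u by rewrite -Hs; apply: tauv_ub => //; rewrite /= eqxx.
have [q [Hq Hqs Hv]] := tauv_ex e v.
have Hqs' : size q = tau.
  by apply/eqP; rewrite eqn_leq tauG_ub // Hqs (Gdet v u) Hu.
case: q Hq Hqs Hqs' Hv => // x t Hq _ Hqs /orP[/eqP->|/eqP Hv].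
  by exists t.
exists (rev (belast x t)).
have -> : v :: rev (belast x t) = rev (x :: t) by rewrite (lastI x t) rev_rcons Hv.
by rewrite gp_rev // size_rev.
Qed.

Lemma some_v : exists v : T, true.
Proof. by case/card_gt0P: Tn => v _; exists v. Qed.

Lemma tau_lt : tau < #|T|.
Proof.
have [v0 _] := some_v.
have [p [Hp Hs]] := tauG_ex e v0.
rewrite ltn_neqAle -Hs (gp_size Hp) andbT; apply/negP => /eqP H.
by apply: Gntr; exists p.
Qed.

Lemma tau_ge1 : 1 <= tau.
Proof. by have [v0 _] := some_v; apply: (tauG_ub (p := [:: v0])). Qed.

Lemma exists_notin (c : seq T) : size c < #|T| -> exists z, z \notin c.
Proof.
move=> Hc; case: (pickP (predC (mem c))) => [z Hz|H]; first by exists z.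
have := cardC (mem c); rewrite (eq_card0 H) addn0 => Hn.
by move: (card_size c); rewrite Hn leqNgt Hc.
Qed.

Lemma edge_leave (S : pred T) a b : a \in S -> b \notin S ->
  exists y z, [/\ y \in S, z \notin S & e y z].
Proof.
move=> Ha Hb.
case: (boolP [exists y, exists z, [&& y \in S, z \notin S & e y z]]).
  by case/existsP => y /existsP[z /and3P[H1 H2 H3]]; exists y, z.
move=> Hn; have Hcl : closed e S.
  move=> x y Hxy; apply/idP/idP => [Hx|Hy]; apply/negPn/negP => H.
    by move/negP: Hn; apply; apply/existsP; exists x; apply/existsP; exists y; rewrite Hx H Hxy.
  by move/negP: Hn; apply; apply/existsP; exists y; apply/existsP; exists x; rewrite Hy H esym Hxy.
by move: (closed_connect Hcl (Gconn a b)); rewrite Ha (negbTE Hb).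
Qed.

Lemma edge_out (c : seq T) x : x \in c -> size c < #|T| ->
  exists y z, [/\ y \in c, z \notin c & e y z].
Proof.
move=> Hx Hc; have [z Hz] := exists_notin Hc.
exact: (edge_leave (S := mem c) Hx Hz).
Qed.

Lemma head_closed x s y : gp (x :: s) -> size (x :: s) = tau -> e x y -> y \in x :: s.
Proof.
move=> Hp Hs Hxy; apply/negPn/negP => Hy.
have : gp (y :: x :: s).
  move: Hp; rewrite /gpath => /andP[H1 H2].
  by rewrite /= esym Hxy H1 /=; rewrite /= in H2 Hy; rewrite Hy H2.
by move/tauG_ub; rewrite /= -Hs /= ltnn.
Qed.

Lemma last_closed x s y : gp (x :: s) -> size (x :: s) = tau -> e (last x s) y -> y \in x :: s.
Proof.
move=> Hp Hs Hy; have Hr := gp_rev esym Hp.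
rewrite (lastI x s) rev_rcons in Hr.
have Hs' : size (last x s :: rev (belast x s)) = tau.
  by rewrite /= size_rev size_belast.
have := head_closed Hr Hs' Hy.
by rewrite -rev_rcons mem_rev -lastI.
Qed.

Lemma no_cycle x s : gp (x :: s) -> size (x :: s) = tau -> e (last x s) x -> False.
Proof.
move=> Hp Hs He.
have Hlt : size (x :: s) < #|T| by rewrite Hs tau_lt.
have [y [z [Hy Hz Hyz]]] := edge_out (mem_head x s) Hlt.
have Hcyc : cycle e (x :: s) by rewrite /= rcons_path He andbT; case/andP: Hp.
set c := x :: s in Hy Hz Hcyc Hp Hs.
set i := index y c.
set t := drop i.+1 c ++ take i c.
have Hrot : rot i c = y :: t by rewrite /rot (drop_nth y) ?index_mem // nth_index.
have Hc' : cycle e (y :: t) by rewrite -Hrot rot_cycle.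
move: Hc'; rewrite /= rcons_path => /andP[Hpt _].
have Hg : gp (z :: y :: t).
  rewrite /gpath -Hrot cons_uniq mem_rot Hz rot_uniq Hrot /= esym Hyz Hpt /=.
  by case/andP: Hp.
by move: (tauG_ub Hg); rewrite -Hrot /= size_rot -Hs ltnn.
Qed.

Lemma cross x A y B : gp (x :: A ++ y :: B) -> size (x :: A ++ y :: B) = tau ->
  e (last x A) (last y B) -> e y x -> False.
Proof.
move=> Hp Hs H1 H2.
have Hg := gp_splice esym Hp H1.
apply: (no_cycle Hg).
  by rewrite /= !size_cat size_rev /=; rewrite /= size_cat in Hs.
by rewrite last_cat rev_cons last_rcons.
Qed.

Lemma tau_ge2 : 2 <= tau.
Proof.
have [v0 _] := some_v.
have Hlt : size [:: v0] < #|T| by apply: leq_ltn_trans tau_ge1 tau_lt.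
have [y [z [Hy Hz Hyz]]] := edge_out (mem_head v0 [::]) Hlt.
have Hg : gp [:: z; y].
  move: Hy; rewrite inE => /eqP Hyv; subst y.
  by rewrite /gpath /= esym Hyz Hz.
exact: (tauG_ub Hg).
Qed.

Lemma two_conn : two_connected e.
Proof.
split; first by apply: leq_ltn_trans tau_ge2 tau_lt.
split => // x u v Hu Hv.
set ex := (fun a b => [&& e a b, a != x & b != x]).
have exsym : symmetric ex.
  move=> a b; rewrite /ex; apply/idP/idP => /and3P[H1 H2 H3]; apply/and3P; split => //; by rewrite esym.
apply/negPn/negP => Hnc.
have [s [Hp Hs]] := longest_from x.
case: s Hp Hs => [|h s] Hp Hs; first by move: tau_ge2; rewrite -Hs.
have Hall : all (fun z => z != x) (h :: s).
  apply/allP => z Hz; apply/eqP => Hzx; subst z.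
  by case/andP: Hp => _; rewrite cons_uniq Hz.
have Hpx : path ex h s.
  apply: (sub_in_path (P := fun z => z != x) (e := e)) => //.
    by move=> a b Ha Hb Hab; apply/and3P; split.
  by case/andP: Hp => /= /andP[].
have Hconn := path_connect Hpx.
have [w0 [Hw0 Hnw0]] : exists w0, w0 != x /\ ~~ connect ex h w0.
  case: (boolP (connect ex h u)) => Hhu; last by exists u.
  case: (boolP (connect ex h v)) => Hhv; last by exists v.
  exfalso; move/negP: Hnc; apply; apply: (connect_trans (y := h)) => //.
  by rewrite (sym_connect_sym exsym).
have HS1 : w0 \in [pred z | (z != x) && connect ex w0 z] by rewrite inE Hw0 connect0.
have HS2 : x \notin [pred z | (z != x) && connect ex w0 z] by rewrite inE eqxx.
have [a [b [Ha Hb Hab]]] := edge_leave HS1 HS2.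
move: Ha Hb; rewrite !inE => /andP[Hax Hwa] Hb.
case: (eqVneq b x) => Hbx; last first.
  move: Hb; rewrite Hbx /=; apply/negP/negPn.
  by apply: (connect_trans Hwa); apply: connect1; rewrite /ex Hab Hax Hbx.
subst b.
have Hna : a \notin x :: h :: s.
  rewrite inE negb_or Hax /=; apply/negP => /Hconn Hha.
  move/negP: Hnw0; apply; apply: (connect_trans Hha).
  by rewrite (sym_connect_sym exsym).
have Hg : gp (a :: x :: h :: s).
  move: Hp; rewrite /gpath => /andP[H1 H2].
  have -> : path e a [:: x, h & s] = e a x && path e x (h :: s) by [].
  by rewrite Hab H1 cons_uniq Hna H2.
by move: (tauG_ub Hg); rewrite /= -Hs /= ltnn.
Qed.

Lemma deg_ge2 v : 2 <= deg e v.
Proof.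
have [s [Hp Hs]] := longest_from v.
case: s Hp Hs => [|h s] Hp Hs; first by move: tau_ge2; rewrite -Hs.
have Hvh : e v h by case/andP: Hp => /= /andP[].
have Hlt : size [:: v; h] < #|T| by apply: leq_ltn_trans tau_ge2 tau_lt.
have [w Hw] := exists_notin Hlt.
move: Hw; rewrite !inE negb_or => /andP[Hwv Hwh].
have Hvh' : v != h by apply/eqP => Hq; move: Hvh; rewrite Hq eirr.
have [_ [_ H2]] := two_conn.
case/connectP: (H2 h v w Hvh' Hwh) => p Hpp Hwl.
case: p Hpp Hwl => [|a p] /=; first by move=> _ Hq; move: Hwv; rewrite Hq eqxx.
move=> /andP[/and3P[Hva _ Hah] _] _.
have Hsub : [set h; a] \subset [set u | e v u].
  by apply/subsetP => z; rewrite !inE => /orP[/eqP->|/eqP->].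
move: (subset_leq_card Hsub); rewrite cards2 eq_sym Hah.
by rewrite /deg.
Qed.

Lemma deg2_nbrs u p q r : deg e u = 2 -> e u p -> e u q -> p != q -> e u r ->
  (r == p) || (r == q).
Proof.
move=> Hd Hp Hq Hpq Hr.
have Hsub : [set p; q] \subset [set z | e u z].
  by apply/subsetP => z; rewrite !inE => /orP[/eqP->|/eqP->].
have /eqP Heq : [set p; q] == [set z | e u z].
  by rewrite eqEcard Hsub cards2 Hpq -/(deg e u) Hd.
have : r \in [set z | e u z] by rewrite inE.
by rewrite -Heq !inE.
Qed.

Lemma deg2_second v u s : gp (v :: s) -> size (v :: s) = tau -> e v u -> deg e u = 2 ->
  head v s = u.
Proof.
move=> Hp Hs Hvu Hd.
have Hu := head_closed Hp Hs Hvu.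
have Huv : u != v by apply/eqP => Hq; move: Hvu; rewrite Hq eirr.
move: Hu; rewrite inE (negbTE Huv) /= => Hus.
move: Hp Hs; case/splitPr: Hus => s1 s2 Hp Hs.
case: s2 Hp Hs => [|w s2] Hp Hs.
  by exfalso; apply: (no_cycle Hp Hs); rewrite last_cat /= esym.
have Hpath := Hp; move: Hpath; rewrite /gpath => /andP[].
rewrite cat_path => /andP[_ /= /and3P[Hpu Huw _]] Hun.
have Hvs : v \notin s1 ++ u :: w :: s2 by case/andP: Hun.
have Hun' : uniq ((v :: s1) ++ u :: w :: s2) := Hun.
have Hpw : last v s1 != w.
  apply/eqP => Hq.
  move: Hun'; rewrite cat_uniq => /and3P[_ /hasPn H _].
  have Hw : w \in u :: w :: s2 by rewrite !inE eqxx orbT.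
  by move: (H w Hw); rewrite -Hq /= mem_last.
have Hup : e u (last v s1) by rewrite esym.
have Huv' : e u v by rewrite esym.
have := deg2_nbrs Hd Hup Huw Hpw Huv'.
case/orP => /eqP Hq; last by move: Hvs; rewrite Hq !mem_cat !inE eqxx !orbT.
clear Hun' Hup; case: s1 Hp Hs Hpu Hvs Hpw Hq Hun => [|y s1] //= _ _ _ Hvs _ Hq.
by move=> _; move: Hvs; rewrite Hq -cat_cons mem_cat mem_last.
Qed.

Lemma deg2_uniq v a b : e v a -> e v b -> deg e a = 2 -> deg e b = 2 -> a = b.
Proof.
move=> Ha Hb Hda Hdb; have [s [Hp Hs]] := longest_from v.
by rewrite -(deg2_second Hp Hs Ha Hda) (deg2_second Hp Hs Hb Hdb).
Qed.

Lemma item2 v : #|[set u | e v u & deg e u == 2]| <= 1.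
Proof.
apply/card_le1_eqP => a b; rewrite !inE => /andP[Ha /eqP Hda] /andP[Hb /eqP Hdb].
by rewrite (deg2_uniq Ha Hb Hda Hdb).
Qed.

Lemma rot_end v : exists s, [/\ gp (v :: s), size (v :: s) = tau & 3 <= deg e (last v s)].
Proof.
have [s [Hp Hs]] := longest_from v.
set l := last v s.
case: (leqP 3 (deg e l)) => Hl; first by exists s.
have Hl2 : deg e l = 2 by apply/eqP; rewrite eqn_leq deg_ge2 andbT -ltnS.
have Hclaim : forall m, e l m ->
    (exists s', [/\ gp (v :: s'), size (v :: s') = tau & 3 <= deg e (last v s')])
    \/ m = last v (belast v s).
  move=> m Hlm.
  have Hm := last_closed Hp Hs Hlm.
  have Hml : m != l by apply/eqP => Hq; move: Hlm; rewrite Hq eirr.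
  have Hvs0 : v :: s = rcons (belast v s) l by rewrite lastI.
  have HmB : m \in belast v s.
    by move: Hm; rewrite Hvs0 mem_rcons inE (negbTE Hml).
  have [B1 [B2 HB]] : exists B1 B2, belast v s = B1 ++ m :: B2.
    by move: HmB; case/splitPr => B1 B2; exists B1, B2.
  rewrite HB in Hvs0.
  case: B2 HB Hvs0 => [|q B3] HB Hvs0.
    by right; rewrite HB last_cat.
  left.
  have [A' HA'] : exists A', rcons B1 m = v :: A'.
    case: B1 HB Hvs0 => [|b B1] HB /= [] -> _; first by exists [::].
    by exists (rcons B1 m).
  have Hs' : s = A' ++ q :: rcons B3 l.
    by move: Hvs0; rewrite rcons_cat /= -cat_rcons HA' => [[]].
  have HlA : last v A' = m.
    by have := f_equal (last v) HA'; rewrite last_rcons /=.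
  rewrite Hs' in Hp Hs.
  have Hml' : e (last v A') (last q (rcons B3 l)) by rewrite HlA last_rcons esym.
  have Hg := gp_splice esym Hp Hml'.
  exists (A' ++ rev (q :: rcons B3 l)); split => //.
    by rewrite -Hs /= !size_cat size_rev.
  rewrite last_cat rev_cons last_rcons.
  case: (leqP 3 (deg e q)) => // Hq.
  have Hq2 : deg e q = 2 by apply/eqP; rewrite eqn_leq deg_ge2 andbT -ltnS.
  have Hmq : e m q.
    move: Hp; rewrite /gpath => /andP[]; rewrite cat_path HlA => /andP[_ /= /andP[]].
    done.
  have Hml2 : e m l by rewrite esym.
  have Hql := deg2_uniq Hmq Hml2 Hq2 Hl2.
  exfalso.
  case/andP: Hp => _; rewrite cons_uniq cat_uniq cons_uniq => /andP[_ /and3P[_ _ /andP[]]].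
  by rewrite Hql mem_rcons mem_head.
have Hd : 1 < #|[set u | e l u]| by rewrite -/(deg e l) Hl2.
case/card_gt1P: Hd => m1 [m2 [Hm1 Hm2 Hne]].
move: Hm1 Hm2; rewrite !inE => Hm1 Hm2.
case: (Hclaim _ Hm1) => // H1; case: (Hclaim _ Hm2) => // H2.
by move: Hne; rewrite H1 H2 eqxx.
Qed.

Lemma item3 : exists (x : T) (s : seq T), [/\ gp (x :: s), size (x :: s) = tau,
      3 <= deg e x & 3 <= deg e (last x s)].
Proof.
have [v0 _] := some_v.
have [s0 [_ _ Hl]] := rot_end v0.
set l := last v0 s0 in Hl.
have [s1 [Hp Hs Hx]] := rot_end l.
set x := last l s1 in Hx.
have Hr : rev (l :: s1) = x :: rev (belast l s1) by rewrite (lastI l s1) rev_rcons.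
exists x, (rev (belast l s1)); split => //.
- by rewrite -Hr gp_rev.
- by rewrite -Hr size_rev.
- have : last x (x :: rev (belast l s1)) = l by rewrite -Hr rev_cons last_rcons.
  by move=> /= ->.
Qed.

Lemma deg_bound v : deg e v + 4 <= tau.
Proof.
have [s [Hp Hs Hl]] := rot_end v.
set l := last v s in Hl.
have Hu : uniq (v :: s) by case/andP: Hp.
have Hvs : v \notin s by move: Hu; rewrite cons_uniq => /andP[].
have Hus : uniq s by move: Hu; rewrite cons_uniq => /andP[].
pose f m := nth v s (index m (v :: s)).
have Hidx : forall m, e l m -> index m (v :: s) < size s.
  move=> m Hlm; have Hm := last_closed Hp Hs Hlm.
  have : index m (v :: s) < (size s).+1 by rewrite -[(size s).+1]/(size (v :: s)) index_mem.
  rewrite ltnS leq_eqVlt => /orP[/eqP Hi|//].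
  have : nth v (v :: s) (index m (v :: s)) = m by rewrite nth_index.
  by rewrite Hi -(last_nth v v s) -/l => Hq; move: Hlm; rewrite Hq eirr.
have Hfs : forall m, e l m -> f m \in s by move=> m Hm; apply: mem_nth; apply: Hidx.
have Hfv : forall m, e l m -> f m != v.
  by move=> m Hm; apply/eqP => Hq; move: (Hfs m Hm); rewrite Hq (negbTE Hvs).
have Hfn : forall m, e l m -> ~~ e v (f m).
  move=> m Hlm; apply/negP => Hvf.
  set i := index m (v :: s).
  have Hi := Hidx m Hlm.
  have Hsplit : s = take i s ++ nth v s i :: drop i.+1 s by rewrite -drop_nth // cat_take_drop.
  have HlA : last v (take i s) = m.
    rewrite (last_nth v) (size_takel (ltnW Hi)).
    have -> : v :: take i s = take i.+1 (v :: s) by [].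
    rewrite nth_take //.
    apply: nth_index; exact: (last_closed Hp Hs Hlm).
  have HlB : last (nth v s i) (drop i.+1 s) = l.
    by rewrite /l; move: (f_equal (last v) Hsplit); rewrite last_cat /= => ->.
  rewrite Hsplit in Hp Hs.
  apply: (cross Hp Hs); first by rewrite HlA HlB esym.
  by rewrite esym.
have Hfinj : {in [set u | e l u] &, injective f}.
  move=> m1 m2; rewrite !inE => H1 H2 Heq.
  have Hi1 := Hidx m1 H1; have Hi2 := Hidx m2 H2.
  move/eqP: Heq; rewrite /f nth_uniq // => /eqP Heq.
  have Hm1 := last_closed Hp Hs H1; have Hm2 := last_closed Hp Hs H2.
  by rewrite -(nth_index v Hm1) -(nth_index v Hm2) Heq.
set N := [set u | e v u].
set F := [set f m | m in [set u | e l u]].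
have HF : #|F| = deg e l by rewrite card_in_imset.
have HNF : N :&: F = set0.
  apply/setP => z; rewrite !inE; apply/negP => /andP[Hz /imsetP[m]].
  by rewrite inE => Hm Hzm; move: (Hfn m Hm); rewrite -Hzm Hz.
have HNFv : (N :|: F) :&: [set v] = set0.
  apply/setP => z; rewrite !inE; apply/negP => /andP[H /eqP Hzv].
  move: H => /orP[Hz|/imsetP[m Hm Hzm]].
    by move: Hz; rewrite Hzv eirr.
  by move: Hm; rewrite ?inE => Hm; move: (Hfv m Hm); rewrite -Hzm Hzv eqxx.
have Hsub : N :|: F :|: [set v] \subset [set z in v :: s].
  apply/subsetP => z; rewrite !inE => /orP[/orP[Hz|/imsetP[m Hm ->]]|->] //.
    by move: (head_closed Hp Hs Hz); rewrite inE.
  by move: Hm; rewrite ?inE => Hm; rewrite Hfs ?orbT.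
move: (subset_leq_card Hsub).
have Hc : #|[set z in v :: s]| = tau by rewrite cardsE (card_uniqP Hu) Hs.
rewrite Hc cardsU HNFv cards0 subn0 cardsU HNF cards0 subn0 cards1 HF.
rewrite -/(deg e v); move: Hl; rewrite /=. lia.
Qed.

Lemma item5 : #|[set v | deg e v == 2]| <= #|[set v | deg e v != 2]|.
Proof.
pose g t := odflt t [pick u | e t u && (deg e u != 2)].
have Hg : forall t, deg e t = 2 -> e t (g t) && (deg e (g t) != 2).
  move=> t Ht; rewrite /g; case: pickP => [u Hu //|Hn].
  have Hd : 1 < #|[set u | e t u]| by rewrite -/(deg e t) Ht.
  case/card_gt1P: Hd => p [q [Hp Hq Hpq]].
  move: Hp Hq; rewrite !inE => Hp Hq.
  move: (Hn p) (Hn q); rewrite /= Hp Hq /= => /negbFE/eqP Hdp /negbFE/eqP Hdq.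
  by move: Hpq; rewrite (deg2_uniq Hp Hq Hdp Hdq) eqxx.
have Hinj : {in [set v | deg e v == 2] &, injective g}.
  move=> t1 t2; rewrite !inE => /eqP H1 /eqP H2 Heq.
  have /andP[Ha _] := Hg t1 H1; have /andP[Hb _] := Hg t2 H2.
  rewrite Heq in Ha; rewrite esym in Ha; rewrite esym in Hb.
  exact: deg2_uniq Ha Hb H1 H2.
rewrite -(card_in_imset Hinj); apply: subset_leq_card.
apply/subsetP => z /imsetP[t]; rewrite inE => /eqP Ht ->.
by rewrite inE; case/andP: (Hg t Ht).
Qed.

Lemma sum_deg : #|[set p : T * T | e p.1 p.2]| = \sum_v deg e v.
Proof.
have Hdeg v : deg e v = \sum_u (e v u : nat).
  rewrite /deg -sum1_card big_mkcond; apply: eq_bigr => u _; rewrite inE; by case: (e v u).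
rewrite (eq_bigr _ (fun v _ => Hdeg v)) pair_big /=.
rewrite -sum1_card big_mkcond; apply: eq_bigr => p _; rewrite inE; by case: (e p.1 p.2).
Qed.

Lemma D_edges : #|[set p : T * T | e p.1 p.2]| <= #|edge_set e| * 2.
Proof.
pose h (p : T * T) := ([set p.1; p.2], (enum_rank p.1 < enum_rank p.2)%N).
have Hinj : {in [set p : T * T | e p.1 p.2] &, injective h}.
  move=> [a b] [a' b']; rewrite !inE /= => Hab Hab' [Hs Hr].
  have Hne : a != b by apply/eqP => Hq; move: Hab; rewrite Hq eirr.
  have Ha : a \in [set a'; b'] by rewrite -Hs !inE eqxx.
  have Hb : b \in [set a'; b'] by rewrite -Hs !inE eqxx orbT.
  move: Ha Hb; rewrite !inE => /orP[/eqP Ha|/eqP Ha] /orP[/eqP Hb|/eqP Hb].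
  - by move: Hne; rewrite Ha Hb eqxx.
  - by rewrite Ha Hb.
  - subst a b; move: Hr.
    case: (ltngtP (enum_rank b') (enum_rank a')) => // Hq _.
    by move: Hne; rewrite (enum_rank_inj (val_inj Hq)) eqxx.
  - by move: Hne; rewrite Ha Hb eqxx.
rewrite -(card_in_imset Hinj).
have Hsub : h @: [set p : T * T | e p.1 p.2] \subset setX (edge_set e) [set: bool].
  apply/subsetP => z /imsetP[[a b]]; rewrite inE /= => Hab ->.
  apply/setXP; split; last by rewrite in_setT.
  apply/imset2P; exists a b => //; by rewrite inE.
by move: (subset_leq_card Hsub); rewrite cardsX cardsT card_bool.
Qed.

Lemma item6 : (5 * #|T| + 3) %/ 4 <= #|edge_set e|.
Proof.
have H1 := D_edges; rewrite sum_deg in H1.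
set O := [set v | deg e v != 2].
have H2 : 2 * #|T| + #|O| <= \sum_v deg e v.
  have -> : 2 * #|T| + #|O| = \sum_v (2 + (deg e v != 2)).
    rewrite big_split /= sum_nat_const mulnC; congr (_ + _).
    rewrite -sum1_card big_mkcond; apply: eq_bigr => u _; rewrite inE; by case: (deg e u != 2).
  apply: leq_sum => v _; have := deg_ge2 v.
  case: (deg e v =P 2) => [->//|Hne] /= H; lia.
have H3 := item5; rewrite -/O in H3.
have H4 : #|[set v | deg e v == 2]| + #|O| = #|T|.
  rewrite -(cardsC [set v | deg e v == 2]); congr (_ + _).
  by apply: eq_card => z; rewrite !inE.
lia.
Qed.

End Main.

Theorem theorem2p2 (T : finType) (e : rel T)
  (T_nonempty : 0 < #|T|) (e_sym : symmetric e) (e_irr : irreflexive e)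
  (Gconn : connected_graph e) (Gntr : ~ traceable e) (Gdet : detour e) :
  (two_connected e /\ 2 <= min_deg e) /\
  (forall v : T, #|[set u | e v u & deg e u == 2]| <= 1) /\
  (exists (x : T) (s : seq T), [/\ gpath e (x :: s), size (x :: s) = tauG e,
      3 <= deg e x & 3 <= deg e (last x s)]) /\
  max_deg e + 4 <= tauG e /\
  #|[set v | deg e v == 2]| <= #|[set v | deg e v != 2]| /\
  (5 * #|T| + 3) %/ 4 <= #|edge_set e|.
Proof.
have H2c : two_connected e by apply: two_conn.
split; [split|split; [|split; [|split; [|split]]]] => //.
- rewrite /min_deg; elim/big_ind: _ => //.
  + by case: H2c => /ltnW.
  + by move=> x y Hx Hy; rewrite leq_min Hx Hy.
  + by move=> v _; apply: deg_ge2.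
- by move=> v; apply: item2.
- by apply: item3.
- have Hv : forall v, deg e v + 4 <= tauG e by move=> v; apply: deg_bound.
  have [v0 _] : exists v : T, true by case/card_gt0P: T_nonempty => v _; exists v.
  have : max_deg e <= tauG e - 4.
    by apply/bigmax_leqP => v _; have := Hv v; lia.
  by have := Hv v0; lia.
- by apply: item5.
- by apply: item6.
Qed.
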